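(* Let $A_0$ be a commutative ring, $d_1,\dots,d_g\in\mathbb{N}$, and let $A=A_0[Y_1,\dots,Y_g]$ be $\mathbb{Z}^2$-graded by $\deg Y_j=(d_j,1)$. Let $F$ be a finitely generated $\mathbb{Z}^2$-graded free $A$-module with homogeneous basis $e_1,\dots,e_p$, let $<$ be a monomial order on $F$, and let $U$ be a $\mathbb{Z}^2$-graded $A$-submodule of $F$. Then $\rho_{F/U}(v)=\rho_{F/\operatorname{in}_<(U)}(v)$ for all $v\in\mathbb{Z}$.
   Context: For a $\mathbb{Z}^2$-graded $A$-module $N$ and $v\in\mathbb{Z}$, $\rho_N(v)=\sup\{i\in\mathbb{Z} : N_{(i,v)}\neq0\}\in\mathbb{Z}\cup\{\pm\infty\}$. Monomials of $F$ are the elements $Y^\alpha e_k$ ($\alpha\in\mathbb{N}^g$); a monomial order on $F$ is a well-ordering of these monomials compatible with multiplication by monomials of $A$ (if $Y^\alpha e_k<Y^\beta e_l$ then $Y^\gamma Y^\alpha e_k<Y^\gamma Y^\beta e_l$). Writing a nonzero $u\in F$ as an $A_0$-linear combination of distinct monomials, its leading term $\operatorname{in}_<(u)=aY^\alpha e_k$ is the largest monomial occurring together with its (nonzero) coefficient $a\in A_0$. $\operatorname{in}_<(U)$ is the $A_0$-submodule of $F$ generated by the leading terms (with coefficients) of all nonzero elements of $U$; it is an $A$-submodule of $F$. *)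

(* Defs.v *)
From HB Require Import structures.
From mathcomp Require Import all_boot all_order all_algebra.
From mathcomp Require Import mpoly.
Set Implicit Arguments. Unset Strict Implicit. Unset Printing Implicit Defensive.
Import Order.TTheory GRing.Theory Num.Theory.
Local Open Scope ring_scope.

(* Monomials Y^alpha e_k of F, encoded as pairs (alpha, k). *)
Definition mon (g p : nat) := ('X_{1..g} * 'I_p)%type.

(* Elements of the free module F = A^p, A = A0[Y_1..Y_g]: a p-tuple of
   polynomials (component k = coefficient of e_k). *)
Definition fmod (R : comNzRingType) (g p : nat) := {ffun 'I_p -> {mpoly R[g]}}.

Definition fcoef (R : comNzRingType) g p (u : fmod R g p) (m : mon g p) : R :=
  (u m.2)@_(m.1).

(* Z^2-degree of Y^alpha e_k: deg e_k = (a k, b k), deg Y_j = (d j, 1). *)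
Definition mdeg2 g p (d : 'I_g -> nat) (a b : 'I_p -> int) (m : mon g p)
  : int * int :=
  (a m.2 + ((\sum_(j < g) (m.1 j * d j))%N)%:Z, b m.2 + (mdeg m.1)%:Z).

Definition is_homog (R : comNzRingType) g p d a b (i v : int) (u : fmod R g p) :=
  forall m : mon g p, fcoef u m != 0 -> @mdeg2 g p d a b m = (i, v).

Definition hcomp (R : comNzRingType) g p d a b (delta : int * int)
  (u : fmod R g p) : fmod R g p :=
  [ffun k => \sum_(al <- msupp (u k) | @mdeg2 g p d a b (al, k) == delta)
               (u k)@_al *: 'X_[al]].

Definition graded_submodule (R : comNzRingType) g p d a b
  (U : fmod R g p -> Prop) :=
  [/\ U 0,
      (forall x y, U x -> U y -> U (x + y)),
      (forall (f : {mpoly R[g]}) x, U x -> U [ffun k => f * x k]) &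
      (forall x delta, U x -> U (@hcomp R g p d a b delta x))].

Definition monomial_order g p (lt : mon g p -> mon g p -> Prop) :=
  [/\ (forall m, ~ lt m m),
      (forall m1 m2 m3, lt m1 m2 -> lt m2 m3 -> lt m1 m3),
      (forall m1 m2, m1 = m2 \/ lt m1 m2 \/ lt m2 m1),
      well_founded lt &
      (forall (al be ga : 'X_{1..g}) (k l : 'I_p),
          lt (al, k) (be, l) -> lt ((ga + al)%MM, k) ((ga + be)%MM, l))].

Definition is_lead (R : comNzRingType) g p (lt : mon g p -> mon g p -> Prop)
  (u : fmod R g p) (m : mon g p) :=
  fcoef u m != 0 /\ (forall m', fcoef u m' != 0 -> m' = m \/ lt m' m).

Definition term_at (R : comNzRingType) g p (u : fmod R g p) (m : mon g p)
  : fmod R g p :=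
  [ffun l => if l == m.2 then fcoef u m *: 'X_[m.1] else 0].

(* in_<(U): the A0-submodule of F generated by the leading terms of all
   nonzero elements of U (smallest A0-submodule containing them) *)
Definition initial_module (R : comNzRingType) g p
  (lt : mon g p -> mon g p -> Prop) (U : fmod R g p -> Prop)
  (w : fmod R g p) : Prop :=
  forall V : fmod R g p -> Prop,
    V 0 -> (forall x y, V x -> V y -> V (x + y)) ->
    (forall (c : R) x, V x -> V (c *: x)) ->
    (forall u m, U u -> u != 0 -> is_lead lt u m -> V (term_at u m)) ->
    V w.

(* (F/W)_(i,v) <> 0, where W is a (graded) submodule: the image of F_(i,v)
   in F/W is nonzero iff some element of F_(i,v) is not in W *)
Definition quot_comp_nonzero (R : comNzRingType) g p d a b
  (W : fmod R g p -> Prop) (i v : int) :=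
  exists u : fmod R g p, @is_homog R g p d a b i v u /\ ~ W u.

Inductive zbar := ZNegInf | ZFin of int | ZPosInf.

Definition zbar_le (x y : zbar) : Prop :=
  match x, y with
  | ZNegInf, _ => True
  | _, ZPosInf => True
  | ZFin i, ZFin j => (i <= j)%R
  | _, _ => False
  end.

Definition is_sup (S : int -> Prop) (r : zbar) :=
  (forall i, S i -> zbar_le (ZFin i) r) /\
  (forall r', (forall i, S i -> zbar_le (ZFin i) r') -> zbar_le r r').

Definition is_rho (R : comNzRingType) g p d a b (W : fmod R g p -> Prop)
  (v : int) (r : zbar) :=
  is_sup (fun i => @quot_comp_nonzero R g p d a b W i v) r.

(* Main.v *)
Require Import Defs.
From HB Require Import structures.
From mathcomp Require Import all_boot all_order all_algebra.
From mathcomp Require Import mpoly.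
From Stdlib Require Import Classical.
Set Implicit Arguments. Unset Strict Implicit. Unset Printing Implicit Defensive.
Import Order.TTheory GRing.Theory Num.Theory.
Local Open Scope ring_scope.

Lemma coef_sum_supp (R : comNzRingType) n (q : {mpoly R[n]}) (P : pred 'X_{1..n}) be :
  (\sum_(al <- msupp q | P al) q@_al *: 'X_[al])@_be = if P be then q@_be else 0.
Proof.
rewrite raddf_sum /=.
under eq_bigr => al _ do rewrite mcoeffZ mcoeffX.
case: (boolP (be \in msupp q)) => Hbe.
  rewrite big_mkcond /= (bigD1_seq be) ?msupp_uniq //=.
  rewrite [X in _ + X]big1_seq ?addr0.
    by case: (P be); rewrite // (_ : (be == be) = true) ?mulr1 //; apply/eqP.
  move=> al /andP[/negbTE Hne _]; case: (P al) => //.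
  by rewrite Hne mulr0.
rewrite big1_seq; last first.
  move=> al /andP[_ Hal]; case: eqP Hal => [->|_ _]; first by rewrite (negbTE Hbe).
  by rewrite mulr0.
by rewrite memN_msupp_eq0 //; case: (P be).
Qed.

Lemma fcoef_hcomp (R : comNzRingType) g p d a b delta (u : fmod R g p) m :
  fcoef (@hcomp R g p d a b delta u) m =
  if @mdeg2 g p d a b m == delta then fcoef u m else 0.
Proof.
case: m => al k; rewrite /fcoef /hcomp ffunE /=.
exact: (coef_sum_supp (u k) (fun al => @mdeg2 g p d a b (al, k) == delta)).
Qed.

Lemma fcoef_term (R : comNzRingType) g p (u : fmod R g p) m0 m :
  fcoef (term_at u m0) m = if m == m0 then fcoef u m0 else 0.
Proof.
case: m m0 => al k [be l]; rewrite /fcoef /term_at ffunE /=.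
case: (k =P l) => [->|Hkl]; last first.
  by rewrite mcoeff0; case: eqP => // -[_ /Hkl].
rewrite mcoeffZ mcoeffX /fcoef /=.
case: (eqVneq be al) => [->|H].
  by case: ifPn => [_|/eqP H]; [rewrite mulr1 | exfalso; apply: H].
case: (be =P al) => [E|_]; first by rewrite E eqxx in H.
rewrite mulr0; case: ifPn => // /eqP [E]; by rewrite E eqxx in H.
Qed.

Lemma fcoefD (R : comNzRingType) g p (u w : fmod R g p) m :
  fcoef (u + w) m = fcoef u m + fcoef w m.
Proof. by rewrite /fcoef ffunE mcoeffD. Qed.
Lemma fcoefN (R : comNzRingType) g p (u : fmod R g p) m :
  fcoef (- u) m = - fcoef u m.
Proof. by rewrite /fcoef ffunE mcoeffN. Qed.
Lemma fcoefZ (R : comNzRingType) g p c (u : fmod R g p) m :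
  fcoef (c *: u) m = c * fcoef u m.
Proof. by rewrite /fcoef ffunE mcoeffZ. Qed.
Lemma fcoef0 (R : comNzRingType) g p m : fcoef (0 : fmod R g p) m = 0.
Proof. by rewrite /fcoef ffunE mcoeff0. Qed.
Lemma fcoefCM (R : comNzRingType) g p c (u : fmod R g p) m :
  fcoef ([ffun k => c%:MP * u k] : fmod R g p) m = c * fcoef u m.
Proof. by rewrite /fcoef ffunE mcoeffCM. Qed.

Lemma fmod_ext (R : comNzRingType) g p (u w : fmod R g p) :
  (forall m, fcoef u m = fcoef w m) -> u = w.
Proof.
move=> H; apply/ffunP => k; apply/mpolyP => al; exact: (H (al, k)).
Qed.

Lemma fmod_decomp (R : comNzRingType) g p (u : fmod R g p) :
  u = \sum_(k < p) \sum_(al <- msupp (u k)) term_at u (al, k).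
Proof.
apply/ffunP => l; rewrite sum_ffunE.
under eq_bigr => k _ do rewrite sum_ffunE.
under eq_bigr => k _ do under eq_bigr => al _ do rewrite /term_at ffunE /=.
rewrite (bigD1 l) //= [X in _ + X]big1 ?addr0; last first.
  move=> k Hk; rewrite big1_seq // => al _.
  by case: ifP => // /eqP E; rewrite E eqxx in Hk.
rewrite {1}(mpolyE (u l)); apply: eq_bigr => al _; by rewrite eqxx.
Qed.

Lemma max_seq (T : eqType) (lt : T -> T -> Prop) :
  (forall m1 m2 m3, lt m1 m2 -> lt m2 m3 -> lt m1 m3) ->
  (forall m1 m2, m1 = m2 \/ lt m1 m2 \/ lt m2 m1) ->
  forall s : seq T, s != [::] ->
  exists m, m \in s /\ (forall m', m' \in s -> m' = m \/ lt m' m).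
Proof.
move=> Htr Htri; elim=> [//|x s IH] _.
case: (eqVneq s [::]) => [->|Hs].
  exists x; split; first by rewrite inE eqxx.
  by move=> m'; rewrite inE => /eqP ->; left.
have [m [Hm Hmax]] := IH Hs.
case: (Htri x m) => [E|[Hxm|Hmx]].
- exists m; split; first by rewrite inE Hm orbT.
  move=> m'; rewrite inE => /orP[/eqP ->|/Hmax //]; by left.
- exists m; split; first by rewrite inE Hm orbT.
  move=> m'; rewrite inE => /orP[/eqP ->|/Hmax //]; by right.
- exists x; split; first by rewrite inE eqxx.
  move=> m'; rewrite inE => /orP[/eqP ->|/Hmax [->|H]]; first by left.
    by right.
  by right; apply: Htr H Hmx.
Qed.

Lemma nz_coef (R : comNzRingType) g p (u : fmod R g p) :
  u != 0 -> exists m, fcoef u m != 0.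
Proof.
move=> Hu; apply: NNPP => H; move/eqP: Hu; apply; apply: fmod_ext => m.
rewrite fcoef0; apply/eqP; apply: NNPP => Hm; apply: H; exists m; exact/negP.
Qed.

Lemma lead_exists (R : comNzRingType) g p (lt : mon g p -> mon g p -> Prop)
  (u : fmod R g p) :
  monomial_order lt -> u != 0 -> exists m, is_lead lt u m.
Proof.
case=> _ Htr Htri _ _ Hu.
pose s := [seq m <- [seq (al, k) | k <- enum 'I_p, al <- msupp (u k)]
          | fcoef u m != 0].
have Hs : forall m, fcoef u m != 0 -> m \in s.
  case=> al k Hm; rewrite mem_filter Hm /=.
  apply/allpairsPdep; exists k, al; split => //; first by rewrite mem_enum.
  by move: Hm; rewrite /fcoef /= mcoeff_eq0 negbK.
have [m0 Hm0] := nz_coef Hu.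
have Hne : s != [::] by apply/eqP => E; move: (Hs _ Hm0); rewrite E.
have [m [Hm Hmax]] := max_seq Htr Htri Hne.
exists m; split; first by move: Hm; rewrite mem_filter => /andP[].
by move=> m' /Hs /Hmax.
Qed.

Section Main.
Context (R : comNzRingType) (g p : nat) (d : 'I_g -> nat) (a b : 'I_p -> int)
  (i v : int).

Local Notation FM := (fmod R g p).
Local Notation hmg := (@is_homog R g p d a b i v).

Lemma homog0 : hmg 0.
Proof. by move=> m; rewrite fcoef0 eqxx. Qed.

Lemma homogD (x y : FM) : hmg x -> hmg y -> hmg (x + y).
Proof.
move=> Hx Hy m; rewrite fcoefD.
case: (eqVneq (fcoef x m) 0) => [->|/Hx //]; rewrite add0r; exact: Hy.
Qed.

Lemma homogB (x y : FM) : hmg x -> hmg y -> hmg (x - y).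
Proof.
move=> Hx Hy; apply: homogD => // m; rewrite fcoefN oppr_eq0; exact: Hy.
Qed.

Lemma homog_hcomp (u : FM) : hmg (@hcomp R g p d a b (i, v) u).
Proof.
move=> m; rewrite fcoef_hcomp; case: ifP => [/eqP -> //|_]; by rewrite eqxx.
Qed.

Lemma homog_term (u : FM) m : hmg u -> hmg (term_at u m).
Proof.
move=> Hu m'; rewrite fcoef_term; case: ifP => [/eqP ->|_]; [exact: Hu | by rewrite eqxx].
Qed.

Lemma term_lead lt (u : FM) m : fcoef u m != 0 ->
  term_at u m != 0 /\ is_lead lt (term_at u m) m.
Proof.
move=> Hm; split.
  apply/eqP => E; move: (fcoef_term u m m); rewrite E fcoef0 eqxx => E2.
  by rewrite -E2 eqxx in Hm.
split; first by rewrite fcoef_term eqxx.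
by move=> m'; rewrite fcoef_term; case: ifP => [/eqP -> _|_]; [by left | by rewrite eqxx].
Qed.

Lemma dirA lt (U : FM -> Prop) :
  (forall w, hmg w -> U w) ->
  forall w, hmg w -> initial_module lt U w.
Proof.
move=> HU w Hw V H0 HD HZ HG.
rewrite (fmod_decomp w).
apply: (big_ind V) => // k _.
apply: (big_ind V) => // al _.
case: (eqVneq (fcoef w (al, k)) 0) => [E|Hne].
  have -> : term_at w (al, k) = 0.
    by apply: fmod_ext => m; rewrite fcoef_term fcoef0 E; case: ifP.
  exact: H0.
have [Hnz Hl] := term_lead lt Hne.
have -> : term_at w (al, k) = term_at (term_at w (al, k)) (al, k).
  by apply: fmod_ext => m; rewrite !fcoef_term eqxx.
apply: (HG _ _ _ Hnz Hl); apply: HU; exact: homog_term.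
Qed.

Lemma extract lt (U : FM -> Prop) :
  graded_submodule d a b U ->
  forall w m, initial_module lt U w -> @mdeg2 g p d a b m = (i, v) ->
  exists u', [/\ U u', hmg u', fcoef u' m = fcoef w m &
                 forall m', fcoef u' m' != 0 -> m' = m \/ lt m' m].
Proof.
case=> U0 UD UM UH w m Hw Hdeg.
apply: (Hw (fun x => exists u', [/\ U u', hmg u', fcoef u' m = fcoef x m &
                 forall m', fcoef u' m' != 0 -> m' = m \/ lt m' m])).
- exists 0; split => //; first exact: homog0.
  by move=> m'; rewrite fcoef0 eqxx.
- move=> x y [u1 [Hu1 Hh1 Hc1 Hb1]] [u2 [Hu2 Hh2 Hc2 Hb2]].
  exists (u1 + u2); split; [exact: UD | exact: homogD | by rewrite !fcoefD Hc1 Hc2|].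
  move=> m'; rewrite fcoefD.
  case: (eqVneq (fcoef u1 m') 0) => [->|/Hb1 //]; rewrite add0r; exact: Hb2.
- move=> c x [u1 [Hu1 Hh1 Hc1 Hb1]].
  exists [ffun k => c%:MP * u1 k]; split; first exact: UM.
  + move=> m'; rewrite fcoefCM.
    by case: (eqVneq (fcoef u1 m') 0) => [->|/Hh1 //]; rewrite mulr0 eqxx.
  + by rewrite fcoefCM fcoefZ Hc1.
  + move=> m'; rewrite fcoefCM.
    by case: (eqVneq (fcoef u1 m') 0) => [->|/Hb1 //]; rewrite mulr0 eqxx.
- move=> u m0 Hu Hu0 [Hl1 Hl2].
  case: (eqVneq m m0) => [E|Hne]; last first.
    exists 0; split => //; first exact: homog0.
      by rewrite fcoef0 fcoef_term (negbTE Hne).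
    by move=> m'; rewrite fcoef0 eqxx.
  subst m0.
  exists (@hcomp R g p d a b (i, v) u); split; first exact: UH.
  + exact: homog_hcomp.
  + by rewrite fcoef_hcomp fcoef_term Hdeg !eqxx.
  + move=> m'; rewrite fcoef_hcomp; case: ifP => _; last by rewrite eqxx.
    exact: Hl2.
Qed.


Lemma dirB lt (U : FM -> Prop) :
  monomial_order lt -> graded_submodule d a b U ->
  (forall w, hmg w -> initial_module lt U w) ->
  forall w, hmg w -> U w.
Proof.
move=> Hmo HU Hin.
have Hmo' := Hmo; case: Hmo' => Hirr Htr Htri Hwf _.
have HU' := HU; case: HU' => U0 UD _ _.
have P : forall m, forall w, hmg w ->
    (forall m', fcoef w m' != 0 -> m' = m \/ lt m' m) -> U w.
  elim/(well_founded_ind Hwf) => m IH.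
  have strict : forall w', hmg w' ->
      (forall m', fcoef w' m' != 0 -> lt m' m) -> U w'.
    move=> w' Hw' Hb.
    case: (eqVneq w' 0) => [->|Hnz]; first exact: U0.
    have [m1 [Hm1 Hl1]] := lead_exists Hmo Hnz.
    exact: (IH m1 (Hb _ Hm1) w' Hw' Hl1).
  move=> w Hw Hb.
  case: (eqVneq (fcoef w m) 0) => [Hm0|Hm0].
    apply: strict => // m' Hm'; case: (Hb _ Hm') => // E.
    by rewrite E Hm0 eqxx in Hm'.
  have Hdeg := Hw _ Hm0.
  have [u' [Hu' Hhu Hcu Hbu]] := extract HU (Hin w Hw) Hdeg.
  have -> : w = u' + (w - u') by rewrite addrC subrK.
  apply: UD => //; apply: strict; first exact: homogB.
  move=> m'; rewrite fcoefD fcoefN => Hm'.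
  case: (eqVneq m' m) => [E|Hne].
    by rewrite E Hcu subrr eqxx in Hm'.
  case: (eqVneq (fcoef w m') 0) => [E|Hw'].
    move: Hm'; rewrite E add0r oppr_eq0 => /Hbu [E2|//].
    by rewrite E2 eqxx in Hne.
  case: (Hb _ Hw') => // E2; by rewrite E2 eqxx in Hne.
move=> w Hw; case: (eqVneq w 0) => [->|Hnz]; first exact: U0.
have [m [Hm Hl]] := lead_exists Hmo Hnz.
exact: (P m w Hw Hl).
Qed.

Lemma comp_equiv lt (U : FM -> Prop) :
  monomial_order lt -> graded_submodule d a b U ->
  @quot_comp_nonzero R g p d a b U i v <->
  @quot_comp_nonzero R g p d a b (initial_module lt U) i v.
Proof.
move=> Hmo HU; split.
- move=> [u [Hu HnU]]; apply: NNPP => H; apply: HnU.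
  apply: (dirB Hmo HU) => // w Hw; apply: NNPP => Hw'; apply: H; by exists w.
- move=> [u [Hu HnU]]; apply: NNPP => H; apply: HnU.
  apply: dirA => // w Hw; apply: NNPP => Hw'; apply: H; by exists w.
Qed.

End Main.

Theorem lemma3p2 (R : comNzRingType) (g p : nat) (d : 'I_g -> nat)
  (a b : 'I_p -> int) (lt : mon g p -> mon g p -> Prop)
  (U : fmod R g p -> Prop) :
  monomial_order lt ->
  graded_submodule d a b U ->
  forall (v : int) (r : zbar),
    is_rho d a b U v r <-> is_rho d a b (initial_module lt U) v r.
Proof.
move=> Hmo HU v r.
have E := fun i => comp_equiv i v Hmo HU.
rewrite /is_rho /is_sup; split.
- move=> [H1 H2]; split.
    by move=> j /E /H1.
  move=> r' H; apply: H2 => j /E; exact: H.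
- move=> [H1 H2]; split.
    by move=> j /E /H1.
  move=> r' H; apply: H2 => j /E; exact: H.
Qed.
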